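(* Let $c_0\in\mathbb C$ with $c_0\notin\{-1,-3,-5,\dots\}$. Then for all $0\le k\le n$, $$E_{n,k}(-1,2;c_0,0)=(c_0)^{\overline n}\frac{(-\frac n2)^{\overline k}(-\frac n2+\frac12)^{\overline k}}{k!\,(\frac{c_0}2+\frac12)^{\overline k}},\qquad E_{n,k}(-1,2;c_0+1,1)=(c_0+1)^{\overline n}\frac{(-\frac n2)^{\overline k}(-\frac n2-\frac12)^{\overline k}}{k!\,(\frac{c_0}2+\frac12)^{\overline k}}.$$ These are nonzero only if $0\le k\le\lfloor n/2\rfloor$, resp. $0\le k\le\lfloor (n+1)/2\rfloor$. Equivalently, the $n$th row polynomials are $(c_0)^{\overline n}\,{}_2F_1(-\frac n2,-\frac n2+\frac12;\frac{c_0}2+\frac12\mid t)$, resp. $(c_0+1)^{\overline n}\,{}_2F_1(-\frac n2,-\frac n2-\frac12;\frac{c_0}2+\frac12\mid t)$.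
   Context: Generalized Eulerian numbers $E_{n,k}(a,b;c_0,c_\infty)$: defined by $E_{0,0}=1$, $E_{n,k}=0$ if $n<0$, $k<0$ or $k>n$, and $E_{n+1,k+1}=[-an+b(k+1)+c_0]E_{n,k+1}+[(a+b)n-bk+c_\infty]E_{n,k}$ for $n\ge0$, $k\in\mathbb Z$; row polynomial $\sum_{k=0}^nE_{n,k}t^k$. $x^{\overline k}=x(x+1)\cdots(x+k-1)$; ${}_2F_1(A,B;C\mid w)=\sum_{k\ge0}\frac{A^{\overline k}B^{\overline k}}{k!\,C^{\overline k}}w^k$. *)

(* Defs.v *)
From mathcomp Require Import all_boot all_order all_algebra complex reals.
Set Implicit Arguments. Unset Strict Implicit. Unset Printing Implicit Defensive.
Import Order.TTheory GRing.Theory Num.Theory.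
Local Open Scope ring_scope.

(* E_{0,0} = 1, E_{n,k} = 0 for k<0 or k>n, and for n >= 0, k in Z:
   E_{n+1,k+1} = (-a n + b(k+1) + c0) E_{n,k+1} + ((a+b) n - b k + cinf) E_{n,k}.
   Negative k are always 0, so we index k by nat; the case k = -1 of the
   recurrence gives E_{n+1,0} = (-a n + c0) E_{n,0}.  The vanishing for
   k > n follows from the recurrence (it is not imposed separately). *)
Fixpoint genEuler (F : fieldType) (a b c0 cinf : F) (n k : nat) {struct n} : F :=
  match n with
  | 0 => if k == 0%N then 1 else 0
  | n'.+1 =>
    match k with
    | 0 => (- a * n'%:R + c0) * genEuler a b c0 cinf n' 0
    | k'.+1 => (- a * n'%:R + b * k'.+1%:R + c0) * genEuler a b c0 cinf n' k'.+1
             + ((a + b) * n'%:R - b * k'%:R + cinf) * genEuler a b c0 cinf n' k'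
    end
  end.

Definition rising (F : fieldType) (x : F) (k : nat) : F :=
  \prod_(i < k) (x + i%:R).

(* Main.v *)
Require Import Defs.
From mathcomp Require Import all_boot all_order all_algebra complex reals.
From mathcomp Require Import ring.
Import Order.TTheory GRing.Theory Num.Theory.
Local Open Scope ring_scope.

Section Aux.
Variable R : realType.
Notation C := (R[i]).

Fixpoint ff (x : C) (j : nat) : C :=
  match j with 0 => 1 | j'.+1 => ff x j' * (x - j'%:R) end.

Lemma ffS x j : ff x j.+1 = ff x j * (x - j%:R). Proof. by []. Qed.

Lemma ff_recl x j : ff x j.+1 = x * ff (x - 1) j.
Proof.
elim: j => [|j IH]; first by rewrite /= !mul1r subr0 mulr1.
rewrite ffS IH ffS -natr1; ring.
Qed.

Lemma ff_zero (m j : nat) : (m < j)%N -> ff m%:R j = 0.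
Proof.
elim: j => [//|j IH]; rewrite ltnS leq_eqVlt => /orP [/eqP ->|/IH h].
  by rewrite ffS subrr mulr0.
by rewrite ffS h mul0r.
Qed.

Lemma natr_dbl k : (k.*2)%:R = 2 * k%:R :> C.
Proof. by rewrite -muln2 natrM mulrC. Qed.

Lemma risingS (x : C) k : rising x k.+1 = rising x k * (x + k%:R).
Proof. by rewrite /rising big_ord_recr. Qed.

Lemma rising0 (x : C) : rising x 0 = 1.
Proof. by rewrite /rising big_ord0. Qed.

Variable c0 : C.
Hypothesis hc0 : forall m : nat, c0 != - (m.*2.+1)%:R.

Lemma fac_ne0 k : c0 + 1 + 2 * k%:R != 0.
Proof.
apply/eqP => h; move: (hc0 k); rewrite -natr1 natr_dbl.
have -> : c0 = - (2 * k%:R + 1) by apply/eqP; rewrite -subr_eq0 -h; apply/eqP; ring.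
by rewrite eqxx.
Qed.

Fixpoint D (k : nat) : C :=
  match k with 0 => 1 | k'.+1 => D k' * (2 * k'.+1%:R * (c0 + 1 + 2 * k'%:R)) end.

Lemma nat_ne0 k : k.+1%:R != 0 :> C.
Proof. by rewrite pnatr_eq0. Qed.

Lemma two_ne0 : 2 != 0 :> C.
Proof. by rewrite pnatr_eq0. Qed.

Lemma D_ne0 k : D k != 0.
Proof.
elim: k => [|k IH] /=; first exact: oner_neq0.
by rewrite !mulf_neq0 // ?two_ne0 ?nat_ne0 ?fac_ne0.
Qed.


Lemma E1 n k : genEuler (-1) 2 c0 0 n k = rising c0 n * ff n%:R (k.*2) / D k.
Proof.
elim: n k => [|n IH] [|k].
- by rewrite /= rising0 !mul1r invr1.
- by rewrite [genEuler _ _ _ _ _ _]/= (@ff_zero 0) // mulr0 mul0r.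
- rewrite /= IH /= risingS !invr1 !mulr1. ring.
- have e1 : ff n.+1%:R (k.*2).+2 = n.+1%:R * (ff n%:R (k.*2) * (n%:R - (k.*2)%:R)).
    by rewrite ff_recl ffS -natr1 addrK.
  have e2 : ff n%:R (k.*2).+2 = ff n%:R (k.*2) * (n%:R - (k.*2)%:R) * (n%:R - (k.*2).+1%:R) by [].
  rewrite [LHS]/= !IH -[k.+1.*2]/((k.*2).+2) e1 e2 risingS /=.
  rewrite -!natr1 !natr_dbl.
  have h1 := D_ne0 k; have h2 := fac_ne0 k; have h3 := nat_ne0 k; have h4 := two_ne0.
  rewrite -natr1 in h3.
  field; rewrite ?h1 ?h2 ?h3 ?h4 //=.
Qed.

Lemma E2 n k : genEuler (-1) 2 (c0 + 1) 1 n k = rising (c0 + 1) n * ff n.+1%:R (k.*2) / D k.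
Proof.
elim: n k => [|n IH] [|k].
- by rewrite /= rising0 !mul1r invr1.
- by rewrite [genEuler _ _ _ _ _ _]/= (@ff_zero 1) // mulr0 mul0r.
- rewrite /= IH /= risingS !invr1 !mulr1. ring.
- have e1 : ff n.+2%:R (k.*2).+2 = n.+2%:R * (ff n.+1%:R (k.*2) * (n.+1%:R - (k.*2)%:R)).
    by rewrite ff_recl ffS -[n.+2%:R]natr1 addrK.
  have e2 : ff n.+1%:R (k.*2).+2 = ff n.+1%:R (k.*2) * (n.+1%:R - (k.*2)%:R) * (n.+1%:R - (k.*2).+1%:R) by [].
  rewrite [LHS]/= !IH -[k.+1.*2]/((k.*2).+2) e1 e2 risingS /=.
  rewrite -!natr1 !natr_dbl.
  have h1 := D_ne0 k; have h2 := fac_ne0 k; have h3 := nat_ne0 k; have h4 := two_ne0.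
  rewrite -natr1 in h3.
  field; rewrite ?h1 ?h2 ?h3 ?h4 //=.
Qed.

Lemma rc_ne0 k : rising (c0 / 2 + 1 / 2) k != 0.
Proof.
rewrite /rising; apply/prodf_neq0 => i _.
have := fac_ne0 i; apply: contra => /eqP h; apply/eqP.
have -> : c0 + 1 + 2 * i%:R = 2 * (c0 / 2 + 1 / 2 + i%:R) by field; rewrite ?two_ne0.
by rewrite h mulr0.
Qed.

Lemma A1 n k : rising (- (n%:R / 2)) k * rising (- (n%:R / 2) + 1 / 2) k
   / (k`!%:R * rising (c0 / 2 + 1 / 2) k) = ff n%:R (k.*2) / D k.
Proof.
elim: k => [|k IH]; first by rewrite !rising0 /= !mul1r invr1.
rewrite !risingS factS natrM -[k.+1.*2]/((k.*2).+2) !ffS /=.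
have h1 := D_ne0 k; have h2 := fac_ne0 k; have h3 := nat_ne0 k; have h4 := two_ne0.
have h5 := rc_ne0 k.
have h6 : k`!%:R != 0 :> C by rewrite pnatr_eq0 -lt0n fact_gt0.
have h7 : c0 / 2 + 1 / 2 + k%:R != 0.
  have := fac_ne0 k; apply: contra => /eqP h; apply/eqP.
  have -> : c0 + 1 + 2 * k%:R = 2 * (c0 / 2 + 1 / 2 + k%:R) by field.
  by rewrite h mulr0.
have ffE : ff n%:R (k.*2) = rising (- (n%:R / 2)) k * rising (- (n%:R / 2) + 1 / 2) k
   / (k`!%:R * rising (c0 / 2 + 1 / 2) k) * D k by rewrite IH divfK.
rewrite ffE.
move: h5 h6; set r1 := rising _ k; set r2 := rising _ k; set r3 := rising _ k => h5 h6.
rewrite -[(k.*2).+1%:R]natr1 !natr_dbl -[k.+1%:R]natr1.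
rewrite -natr1 in h3.
by field; rewrite h1 h2 h3 h5 h6.
Qed.

Lemma A2 n k : rising (- (n%:R / 2)) k * rising (- (n%:R / 2) - 1 / 2) k
   / (k`!%:R * rising (c0 / 2 + 1 / 2) k) = ff n.+1%:R (k.*2) / D k.
Proof.
elim: k => [|k IH]; first by rewrite !rising0 /= !mul1r invr1.
rewrite !risingS factS natrM -[k.+1.*2]/((k.*2).+2) !ffS /=.
have h1 := D_ne0 k; have h2 := fac_ne0 k; have h3 := nat_ne0 k; have h4 := two_ne0.
have h5 := rc_ne0 k.
have h6 : k`!%:R != 0 :> C by rewrite pnatr_eq0 -lt0n fact_gt0.
have h7 : c0 / 2 + 1 / 2 + k%:R != 0.
  have := fac_ne0 k; apply: contra => /eqP h; apply/eqP.
  have -> : c0 + 1 + 2 * k%:R = 2 * (c0 / 2 + 1 / 2 + k%:R) by field.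
  by rewrite h mulr0.
have ffE : ff n.+1%:R (k.*2) = rising (- (n%:R / 2)) k * rising (- (n%:R / 2) - 1 / 2) k
   / (k`!%:R * rising (c0 / 2 + 1 / 2) k) * D k by rewrite IH divfK.
rewrite ffE.
move: h5 h6; set r1 := rising _ k; set r2 := rising _ k; set r3 := rising _ k => h5 h6.
rewrite -[(k.*2).+1%:R]natr1 !natr_dbl -[k.+1%:R]natr1 -[n.+1%:R]natr1.
rewrite -natr1 in h3.
by field; rewrite h1 h2 h3 h5 h6.
Qed.

End Aux.

Theorem mainTheorem18 (R : realType) (c0 : R[i])
  (hc0 : forall m : nat, c0 != - (m.*2.+1)%:R) :
  forall n k : nat, (k <= n)%N ->
    [/\ genEuler (-1) 2 c0 0 n k =
          rising c0 n *
          (rising (- (n%:R / 2)) k * rising (- (n%:R / 2) + 1 / 2) k)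
          / (k`!%:R * rising (c0 / 2 + 1 / 2) k),
        genEuler (-1) 2 (c0 + 1) 1 n k =
          rising (c0 + 1) n *
          (rising (- (n%:R / 2)) k * rising (- (n%:R / 2) - 1 / 2) k)
          / (k`!%:R * rising (c0 / 2 + 1 / 2) k),
        genEuler (-1) 2 c0 0 n k != 0 -> (k <= n./2)%N
      & genEuler (-1) 2 (c0 + 1) 1 n k != 0 -> (k <= n.+1./2)%N].
Proof.
move=> n k _; split.
- by rewrite (@E1 R c0 hc0) -mulrA -(@A1 R c0 hc0) mulrA.
- by rewrite (@E2 R c0 hc0) -mulrA -(@A2 R c0 hc0) mulrA.
- rewrite (@E1 R c0 hc0); apply: contraR; rewrite geq_half_double -ltnNge => h.
  by rewrite ff_zero // mulr0 mul0r.
- rewrite (@E2 R c0 hc0); apply: contraR; rewrite geq_half_double -ltnNge => h.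
  by rewrite ff_zero // mulr0 mul0r.
Qed.
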